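(* Let $X$ be a compact Hausdorff space and let $L$ be a normal, distributive and disjunctive lattice. If $X$ has a base $\mathcal B$ for its closed sets that is a sublattice of the lattice of closed subsets of $X$ (containing $\emptyset$ and $X$) and there is a lattice embedding of $\mathcal B$ into $L$, then the Wallman space $wL$ admits a continuous surjection onto $X$.
   Context: Lattices have a least element $\mathbf 0$ and a greatest element $\mathbf 1$, and lattice embeddings are injective maps preserving $\wedge,\vee,\mathbf 0,\mathbf 1$ (for $\mathcal B$: $\cap,\cup,\emptyset,X$). $L$ is disjunctive if whenever $a\not\le b$ there is $c\in L$ with $c\le a$ and $c\wedge b=\mathbf 0$. $L$ is normal if for all $x,y$ with $x\wedge y=\mathbf 0$ there are $u,v$ with $x\wedge u=\mathbf 0$, $y\wedge v=\mathbf 0$ and $u\vee v=\mathbf 1$. The Wallman space $wL$ is the set of ultrafilters (maximal proper filters) of $L$, topologized by taking the sets $\{p\in wL: a\in p\}$, $a\in L$, as a base for the closed sets; it is a compact $T_1$-space, and it is Hausdorff when $L$ is normal. *)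

(* Defs.v *)
From HB Require Import structures.
From mathcomp Require Import all_boot all_order.
From mathcomp Require Import boolp classical_sets topology.
Set Implicit Arguments. Unset Strict Implicit. Unset Printing Implicit Defensive.
Import Order.TTheory.
Local Open Scope order_scope.
Local Open Scope classical_set_scope.

Section Wallman.
Context {d : Order.disp_t} (L : tbLatticeType d).

Definition lfilter (F : set L) : Prop :=
  F \top /\ (forall a b, F a -> (a <= b)%O -> F b) /\
  (forall a b, F a -> F b -> F (a `&` b)%O).

Definition proper_lfilter (F : set L) : Prop := lfilter F /\ ~ F \bot.

Definition lultrafilter (F : set L) : Prop :=
  proper_lfilter F /\ (forall G, proper_lfilter G -> F `<=` G -> G = F).

Definition normal_lattice : Prop :=
  forall x y : L, (x `&` y = \bot)%O ->
    exists u v : L, (x `&` u = \bot)%O /\ (y `&` v = \bot)%O /\ (u `|` v = \top)%O.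

Definition disjunctive_lattice : Prop :=
  forall a b : L, ~ (a <= b)%O -> exists c : L, c != \bot /\ (c <= a)%O /\ (c `&` b = \bot)%O.

Definition wallman : Type := {p : set L | lultrafilter p}.

HB.instance Definition _ := gen_eqMixin wallman.
HB.instance Definition _ := gen_choiceMixin wallman.

Definition wallman_index : Type := L.
HB.instance Definition _ := Choice.on wallman_index.
HB.instance Definition _ := isPointed.Build wallman_index (\top : L).

Definition wbasic (a : L) : set wallman := [set p | sval p a].

(* topology whose closed sets have the sets wbasic a as a base, i.e. whose
   open sets are generated by their complements *)
HB.instance Definition _ := @isSubBaseTopological.Build wallman
  wallman_index setT (fun a : wallman_index => ~` wbasic a).

End Wallman.

Section Embed.
Context {T : topologicalType} {d : Order.disp_t} (L : tbLatticeType d).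

Definition closed_base_sublattice (B : set (set T)) : Prop :=
  (forall D, B D -> closed D) /\
  (forall C, closed C -> C = \bigcap_(D in [set D | B D /\ C `<=` D]) D) /\
  (forall D E, B D -> B E -> B (D `&` E)) /\
  (forall D E, B D -> B E -> B (D `|` E)) /\
  B set0 /\ B setT.

Definition lattice_embedding (B : set (set T)) (e : set T -> L) : Prop :=
  {in B &, injective e} /\
  (forall D E, B D -> B E -> e (D `&` E) = (e D `&` e E)%O) /\
  (forall D E, B D -> B E -> e (D `|` E) = (e D `|` e E)%O) /\
  e set0 = \bot /\ e setT = \top.

End Embed.

(* Main.v *)
Require Import Defs.
From HB Require Import structures.
From mathcomp Require Import all_boot all_order.
From mathcomp Require Import boolp classical_sets topology.
From mathcomp Require Import finmap.
Import Order.TTheory.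
Local Open Scope order_scope.
Local Open Scope classical_set_scope.

Lemma wopen d (L : tbLatticeType d) (a : L) : open (~` wbasic a : set (wallman L)).
Proof.
rewrite /open /=.
exists [set (~` wbasic a)].
  move=> _ ->. exists [fset (a : wallman_index L)]%fset.
    by move=> i _; apply: in_setT.
  by rewrite set_fset1 bigcap_set1.
by rewrite bigcup_set1.
Qed.

Lemma uf_exists d (L : tbLatticeType d) (F : set L) :
  proper_lfilter F -> exists G, lultrafilter G /\ F `<=` G.
Proof.
move=> PF.
have [[FT [FU FI]] FB] := PF.
pose P := [set G : set L | G = set0 \/ (proper_lfilter G /\ F `<=` G)].
have [|A [PA Amax]] := @Zorn_bigcup L P.
  move=> C CP Ctot.
  have hC : forall G x, C G -> G x -> proper_lfilter G /\ F `<=` G.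
    move=> G x CG Gx; case: (CP G CG) => // G0; by rewrite G0 in Gx.
  case: (pselect (exists G x, C G /\ G x)) => [[G0 [x0 [CG0 G0x]]]|nex]; last first.
    left; rewrite predeqE => x; split=> // [[G CG Gx]]; apply: nex.
    by exists G, x.
  right.
  have [[[G0T _] _] FG0] := hC _ _ CG0 G0x.
  split; last by move=> x Fx; exists G0 => //; exact: FG0.
  split; last first.
    move=> [G CG Gb]; have [[_ nb] _] := hC _ _ CG Gb; exact: nb.
  split; first by exists G0.
  split.
    move=> a b [G CG Ga] ab; exists G => //.
    have [[[_ [GU _]] _] _] := hC _ _ CG Ga; exact: GU ab.
  move=> a b [G1 CG1 G1a] [G2 CG2 G2b].
  case: (Ctot _ _ CG1 CG2) => [s12|s21].
    exists G2 => //; have [[[_ [_ GI]] _] _] := hC _ _ CG2 G2b.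
    by apply: GI => //; exact: s12.
  exists G1 => //; have [[[_ [_ GI]] _] _] := hC _ _ CG1 G1a.
  by apply: GI => //; exact: s21.
case: PA => [A0|[PA FA]].
  exfalso; apply: (Amax F); last by right; split.
  rewrite A0 properEneq; split => //; apply/eqP => /esym F0.
  by rewrite F0 in FT.
exists A; split => //; split => // G PG AG.
apply: contrapT => GA; apply: (Amax G).
  rewrite properEneq; split => //; apply/eqP => /esym; exact: GA.
by right; split => //; exact: subset_trans AG.
Qed.

Arguments uf_exists {d L F}.

Section UF.
Local Open Scope order_scope.
Context {d : Order.disp_t} (L : tbDistrLatticeType d).

Lemma uf_compl (p : set L) (a : L) : lultrafilter p -> ~ p a ->
  exists q, p q /\ (q `&` a = \bot).
Proof.
move=> [[[pT [pU pI]] pB] pM] npa.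
apply: contrapT => nex.
pose G := [set c | exists q, p q /\ (q `&` a <= c)].
have GF : proper_lfilter G.
  split; [split; [|split]|].
  - by exists \top; split => //; exact: le1x.
  - move=> x y [q [pq qx]] xy; exists q; split => //; exact: le_trans qx xy.
  - move=> x y [q1 [p1 h1]] [q2 [p2 h2]]; exists (q1 `&` q2); split; first exact: pI.
    rewrite lexI; apply/andP; split.
      apply: le_trans h1; apply: leI2; [exact: leIl|exact: lexx].
    apply: le_trans h2; apply: leI2; [exact: leIr|exact: lexx].
  - move=> [q [pq qa]]; apply: nex; exists q; split => //.
    by apply/eqP; rewrite -lex0.
have pG : p `<=` G by move=> c pc; exists c; split => //; exact: leIl.
have GE := pM G GF pG.
apply: npa; rewrite -GE; exists \top; split => //; exact: leIr.
Qed.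

Arguments uf_compl {p a}.

Lemma uf_prime (p : set L) (a b : L) : lultrafilter p -> p (a `|` b) -> p a \/ p b.
Proof.
move=> up pab; apply: contrapT => /not_orP [na nb].
have [q1 [p1 e1]] := uf_compl up na.
have [q2 [p2 e2]] := uf_compl up nb.
have [[[pT [pU pI]] pB] _] := up.
apply: pB; apply: (pU ((q1 `&` q2) `&` (a `|` b))); first by apply: (pI) => //; exact: (pI).
rewrite meetUr leUx; apply/andP; split.
  by rewrite -e1; apply: leI2; [exact: leIl|exact: lexx].
by rewrite -e2; apply: leI2; [exact: leIr|exact: lexx].
Qed.

End UF.
Arguments uf_prime {d L p a b}.

Theorem lemma5p2 (X : topologicalType) (d : Order.disp_t)
  (L : tbDistrLatticeType d) :
  compact [set: X] -> hausdorff_space X ->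
  normal_lattice L -> disjunctive_lattice L ->
  forall (B : set (set X)) (e : set X -> L),
    closed_base_sublattice B -> lattice_embedding B e ->
  exists f : wallman L -> X, continuous f /\ (forall x : X, exists p : wallman L, f p = x).
Proof.
move=> cX hX _ _ B e [Bcl [Bbase [BI [BU [B0 BT]]]]] [einj [eI [eU [e0 eT]]]].
have X1 : forall C x, closed C -> ~ C x -> exists D, B D /\ C `<=` D /\ ~ D x.
  move=> C x cC nCx.
  have E := Bbase C cC.
  have nx : ~ (\bigcap_(D in [set D | B D /\ C `<=` D]) D) x by rewrite -E.
  apply: contrapT => nex; apply: nx => D [BD CD]; apply: contrapT => nDx.
  by apply: nex; exists D.
have X3 : forall K C, closed K -> closed C -> K `&` C = set0 ->
    exists F, B F /\ K `<=` F /\ F `&` C = set0.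
  move=> K C cK cC KC; apply: contrapT => nex.
  pose G := filter_from [set F | B F /\ K `<=` F] (fun F => F `&` C).
  have GF : Filter G.
    apply: filter_from_filter; first by exists setT.
    move=> F1 F2 [B1 K1] [B2 K2]; exists (F1 `&` F2).
      split; first exact: BI.
      by move=> z Kz; split; [exact: K1|exact: K2].
    by move=> z [[F1z F2z] Cz].
  have GP : ProperFilter G.
    apply: filter_from_proper => F [BF KF].
    apply/set0P/eqP => FC; apply: nex; exists F; split => //.
  have [y [_ cly]] := cX G GP filterT.
  rewrite clusterE in cly.
  have yFC : forall F, B F -> K `<=` F -> F y /\ C y.
    move=> F BF KF.
    have cFC : closed (F `&` C) by apply: closedI => //; exact: Bcl.
    have : closure (F `&` C) y by apply: cly; exists F.
    by have <- : F `&` C = closure (F `&` C) by apply/closure_id.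
  have Cy : C y by have [] := yFC setT BT (fun _ _ => I).
  have Ky : K y.
    rewrite (Bbase K cK) => D [BD KD]; exact: (yFC D BD KD).1.
  have : (K `&` C) y by [].
  by rewrite KC.
have hpt : forall p : wallman L, exists x, forall D, B D -> sval p (e D) -> D x.
  move=> [p up] /=.
  have [[[pT [pU pI]] pB] _] := up.
  pose G := filter_from [set D | B D /\ p (e D)] id.
  have GF : Filter G.
    apply: filter_from_filter; first by exists setT; split => //; rewrite eT.
    move=> D1 D2 [B1 p1] [B2 p2]; exists (D1 `&` D2) => //.
    by split; [exact: BI| rewrite eI //; exact: pI].
  have GP : ProperFilter G.
    apply: filter_from_proper => D [BD pD].
    apply/set0P/eqP => D0; apply: pB; by rewrite -e0 -D0.
  have [y [_ cly]] := cX G GP filterT.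
  rewrite clusterE in cly.
  exists y => D BD pD.
  have : closure D y by apply: cly; exists D.
  by have <- : D = closure D by apply/closure_id; exact: Bcl.
case: (choice hpt) => f hf.
exists f; split.
  apply/continuousP => W oW; rewrite openE => p Wfp.
  have reg : filter_from (nbhs (f p)) closure --> f p.
    exact: (compact_regular (x:=f p) hX cX filterT).
  have nW : nbhs (f p) W by apply: open_nbhs_nbhs.
  have [O nO cOW] := reg W nW.
  move: nO; rewrite nbhsE => -[O' [oO' O'x] O'O].
  have [E [BE [O'E nEx]]] := X1 (~` O') (f p) (open_closedC oO') (fun h => h O'x).
  have [F [BF [OF FW]]] : exists F, B F /\ closure O `<=` F /\ F `&` ~` W = set0.
    apply: X3; [exact: closed_closure| exact: open_closedC |].
    rewrite predeqE => z; split => // -[Oz nWz]; apply: nWz; exact: cOW.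
  have EF : E `|` F = setT.
    rewrite predeqE => z; split => // _.
    case: (pselect (E z)) => Ez; [by left|right].
    apply: OF; apply: subset_closure; apply: O'O.
    by apply: contrapT => nz; apply: Ez; exact: O'E.
  apply: (@filterS _ _ _ (~` wbasic (e E))).
    move=> r nr /=.
    have [[[rT _] _] _] := svalP r.
    have : sval r (e E `|` e F)%O by rewrite -eU // EF eT.
    case/(uf_prime (svalP r)) => [//|rF].
    have Ffr := hf r F BF rF.
    apply: contrapT => nWr.
    have : (F `&` ~` W) (f r) by [].
    by rewrite FW.
  apply: open_nbhs_nbhs; split; first exact: wopen.
  move=> pE; apply: nEx; exact: hf p E BE pE.
move=> x.
pose p0 := [set a | exists D, B D /\ D x /\ e D <= a].
have p0F : proper_lfilter p0.
  split; [split; [|split]|].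
  - by exists setT; rewrite eT.
  - move=> a b [D [BD [Dx le]]] ab; exists D; split => //; split => //.
    exact: le_trans le ab.
  - move=> a b [D1 [B1 [D1x l1]]] [D2 [B2 [D2x l2]]]; exists (D1 `&` D2).
    split; first exact: BI.
    by split; [| rewrite eI //; exact: leI2].
  - move=> [D [BD [Dx le]]].
    have eD : e D = e set0 by rewrite e0; apply/eqP; rewrite -lex0.
    have := einj D set0 (mem_set BD) (mem_set B0) eD.
    by move=> D0; rewrite D0 in Dx.
have [p [up p0p]] := uf_exists p0F.
exists (exist _ p up).
apply: contrapT => neq.
have cx : closed [set x] by apply: accessible_closed_set1; exact: hausdorff_accessible.
have [D [BD [xD nD]]] := X1 [set x] (f (exist _ p up)) cx (fun h => neq h).
apply: nD; apply: hf => //=; apply: p0p; exists D; split => //; split => //.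
  exact: xD.
Qed.
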